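(* Let $n>2$ and let $\psi\in V(n-1)$. Then for all $x,y\in\mathbb{R}^{n,+}$ one has $\psi(\hat y)=\widehat{\psi(y)}$ and $$\|C(x,y)\|=\|C(\psi(x),\psi(y))\|,$$ where $C(x,y)=e_n(x-y)(x-\hat y)^{-1}$.
   Context: $Cl_n$ is the real Clifford algebra generated by an orthonormal basis $e_1,\dots,e_n$ of $\mathbb{R}^n$ with $e_ie_j+e_je_i=-2\delta_{ij}$; vectors $x=\sum x_je_j$ of $\mathbb{R}^n$ are viewed in $Cl_n$, and a nonzero vector has inverse $x^{-1}=-x/\|x\|^2$. $\mathbb{R}^{n,+}=\{x:x_n>0\}$. For $y=y_1e_1+\dots+y_ne_n$, $\hat y=y_1e_1+\dots+y_{n-1}e_{n-1}-y_ne_n$ (reflection in $\mathbb{R}^{n-1}=\mathrm{span}\{e_1,\dots,e_{n-1}\}$). For $A=\sum_A a_Ae_A\in Cl_n$, $\|A\|=(\sum_A a_A^2)^{1/2}$. The reversion $\sim$ is the anti-automorphism of $Cl_n$ with $\widetilde{e_{j_1}\cdots e_{j_r}}=e_{j_r}\cdots e_{j_1}$. $V(n-1)$ denotes the (Vahlen) group of Möbius transformations of $\mathbb{R}^n\cup\{\infty\}$ of the form $\psi(x)=(ax+b)(cx+d)^{-1}$ where $a,b,c,d\in Cl_{n-1}$ are each products of vectors of $\mathbb{R}^{n-1}$ (or zero), $\tilde a c,\ \tilde c d,\ \tilde d b,\ \tilde b a\in\mathbb{R}^{n-1}$ and $\tilde a d-\tilde b c=\pm1$; these are the extensions to $\mathbb{R}^n\cup\{\infty\}$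 of the Möbius transformations of $\mathbb{R}^{n-1}\cup\{\infty\}$. *)

(* Defs.v *)
From HB Require Import structures.
From mathcomp Require Import all_boot all_order all_algebra.
From mathcomp Require Import reals.
From Stdlib Require Import ClassicalEpsilon.
Set Implicit Arguments. Unset Strict Implicit. Unset Printing Implicit Defensive.
Import Order.TTheory GRing.Theory Num.Theory.
Local Open Scope ring_scope.

Section Clifford.
Variables (R : realType) (n : nat).

(* Cl_n : elements are families (a_A)_A indexed by subsets A of {e_1,..,e_n};
   generator e_{i+1} corresponds to the ordinal i : 'I_n. *)
Definition Cl := {ffun {set 'I_n} -> R}.

(* sign in e_A e_B = sign A B * e_{A Δ B}, with e_i^2 = -1 *)
Definition clsign (A B : {set 'I_n}) : R :=
  (-1) ^+ (#|[set p : 'I_n * 'I_n | (p.1 \in A) && (p.2 \in B) && (p.2 < p.1)%N]|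
           + #|A :&: B|)%N.

Definition cladd (x y : Cl) : Cl := [ffun A => x A + y A].
Definition clopp (x : Cl) : Cl := [ffun A => - x A].
Definition clsub (x y : Cl) : Cl := cladd x (clopp y).
Definition clscale (r : R) (x : Cl) : Cl := [ffun A => r * x A].

Definition clmul (x y : Cl) : Cl :=
  [ffun C => \sum_(A : {set 'I_n}) \sum_(B : {set 'I_n} | (A :\: B) :|: (B :\: A) == C)
              clsign A B * x A * y B].

Definition clone : Cl := [ffun A => (A == set0)%:R].

Definition clvec (v : 'I_n -> R) : Cl := [ffun A => \sum_(i : 'I_n) (A == [set i])%:R * v i].

(* the last index n (ordinal n-1) *)
Definition is_last (i : 'I_n) : bool := (val i == n.-1)%N.

Definition en : Cl := clvec (fun i => (is_last i)%:R).

Definition upper (v : 'I_n -> R) : Prop := forall i, is_last i -> 0 < v i.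

Definition in_Rn1 (v : 'I_n -> R) : Prop := forall i, is_last i -> v i = 0.

(* hat: the reflection in R^{n-1}; on Cl_n we use its natural extension
   (the automorphism e_n |-> -e_n), which on vectors is y |-> y-hat. *)
Definition clhat (x : Cl) : Cl :=
  [ffun A : {set 'I_n} => if [exists i : 'I_n, (i \in A) && is_last i] then - x A else x A].

(* reversion: e_{j1}...e_{jr} |-> e_{jr}...e_{j1} = (-1)^(r(r-1)/2) e_{j1}...e_{jr} *)
Definition clrev (x : Cl) : Cl := [ffun A : {set 'I_n} => (-1) ^+ 'C(#|A|, 2) * x A].

Definition clnorm (x : Cl) : R := Num.sqrt (\sum_(A : {set 'I_n}) x A ^+ 2).

(* two-sided inverse in Cl_n (arbitrary value if x is not invertible) *)
Definition clinv (x : Cl) : Cl :=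
  epsilon (inhabits clone) (fun y => clmul x y = clone /\ clmul y x = clone).

(* a is a product of vectors of R^{n-1} (the empty product being 1; zero is
   included as a product containing the zero vector) *)
Definition vecprod_Rn1 (a : Cl) : Prop :=
  exists s : seq ('I_n -> R), (forall v, List.In v s -> in_Rn1 v) /\
                              a = foldr clmul clone (map clvec s).

Definition is_vec_Rn1 (x : Cl) : Prop := exists v, in_Rn1 v /\ x = clvec v.

Definition vahlen (a b c d : Cl) : Prop :=
  [/\ vecprod_Rn1 a, vecprod_Rn1 b, vecprod_Rn1 c & vecprod_Rn1 d] /\
  [/\ is_vec_Rn1 (clmul (clrev a) c), is_vec_Rn1 (clmul (clrev c) d),
      is_vec_Rn1 (clmul (clrev d) b) & is_vec_Rn1 (clmul (clrev b) a)] /\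
  (clsub (clmul (clrev a) d) (clmul (clrev b) c) = clone \/
   clsub (clmul (clrev a) d) (clmul (clrev b) c) = clopp clone).

Definition mobius (a b c d : Cl) (x : Cl) : Cl :=
  clmul (cladd (clmul a x) b) (clinv (cladd (clmul c x) d)).

Definition Cxy (x y : Cl) : Cl :=
  clmul (clmul en (clsub x y)) (clinv (clsub x (clhat y))).

End Clifford.

(* Main.v *)
Require Import Defs.
From HB Require Import structures.
From mathcomp Require Import all_boot all_order all_algebra.
From mathcomp Require Import reals.
From mathcomp Require Import ring zify.
From Stdlib Require Import ClassicalEpsilon.
Set Implicit Arguments. Unset Strict Implicit. Unset Printing Implicit Defensive.
Import Order.TTheory GRing.Theory Num.Theory.
Local Open Scope ring_scope.

Section SD.
Variable T : finType.
Definition sd (A B : {set T}) : {set T} := (A :\: B) :|: (B :\: A).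
Lemma in_sd (A B : {set T}) x : (x \in sd A B) = (x \in A) (+) (x \in B).
Proof. by rewrite !inE; case: (x \in A); case: (x \in B). Qed.
Lemma sdK A B : sd A (sd A B) = B.
Proof. by apply/setP => x; rewrite !in_sd; case: (x \in A); case: (x \in B). Qed.
Lemma sdC A B : sd A B = sd B A.
Proof. by apply/setP => x; rewrite !in_sd; case: (x \in A); case: (x \in B). Qed.
Lemma sdA A B C : sd A (sd B C) = sd (sd A B) C.
Proof. by apply/setP => x; rewrite !in_sd; case: (x \in A); case: (x \in B); case: (x \in C). Qed.
Lemma sd0 A : sd A set0 = A.
Proof. by apply/setP => x; rewrite !in_sd inE; case: (x \in A). Qed.
Lemma sdv A : sd A A = set0.
Proof. by apply/setP => x; rewrite !in_sd inE; case: (x \in A). Qed.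
Lemma sd_eq0 A B : (sd A B == set0) = (A == B).
Proof.
apply/eqP/eqP => [h|->]; last exact: sdv.
by rewrite -(sdK A B) h sd0.
Qed.
Lemma sd_eq A B C : (sd A B == C) = (B == sd A C).
Proof. by apply/eqP/eqP => [<-|->]; rewrite sdK. Qed.
Lemma card_sd (X Y : {set T}) : (#|sd X Y| + 2 * #|X :&: Y| = #|X| + #|Y|)%N.
Proof.
have h1 := cardsID Y X. have h2 := cardsID X Y.
have h3 := cardsUI (X :\: Y) (Y :\: X).
have e : (X :\: Y) :&: (Y :\: X) = set0.
  by apply/setP => x; rewrite !inE; case: (x \in X); case: (x \in Y).
rewrite e cards0 addn0 in h3. rewrite /sd h3 setIC in h1 *. lia.
Qed.
End SD.

Lemma sgn_eq (R : ringType) (a b c k : nat) : (a + 2 * k = b + c)%N ->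
  (-1) ^+ a = (-1) ^+ b * (-1) ^+ c :> R.
Proof.
move=> h; rewrite -exprD -h exprD exprM sqrrN expr1n expr1n mulr1 //.
Qed.
Section Sign.
Variables (R : realType) (n : nat).
Local Notation Cl := (Cl R n).
Local Notation sg := (@clsign R n).
Definition invs (A B : {set 'I_n}) :=
  [set p : 'I_n * 'I_n | (p.1 \in A) && (p.2 \in B) && (p.2 < p.1)%N].
Lemma clsignE A B : sg A B = (-1) ^+ (#|invs A B| + #|A :&: B|).
Proof. by []. Qed.
Lemma invs_sdl A B C : invs (sd A B) C = sd (invs A C) (invs B C).
Proof.
apply/setP => p; rewrite [in RHS]in_sd !inE.
by case: (p.1 \in A); case: (p.1 \in B); case: (p.2 \in C); case: (p.2 < p.1)%N.
Qed.
Lemma invs_sdr A B C : invs A (sd B C) = sd (invs A B) (invs A C).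
Proof.
apply/setP => p; rewrite [in RHS]in_sd !inE.
by case: (p.1 \in A); case: (p.2 \in B); case: (p.2 \in C); case: (p.2 < p.1)%N.
Qed.
Lemma sdIl (A B C : {set 'I_n}) : sd A B :&: C = sd (A :&: C) (B :&: C).
Proof. by apply/setP => x; rewrite [in RHS]in_sd !inE; case: (x \in A); case: (x \in B); case: (x \in C). Qed.
Lemma sdIr (A B C : {set 'I_n}) : A :&: sd B C = sd (A :&: B) (A :&: C).
Proof. by apply/setP => x; rewrite [in RHS]in_sd !inE; case: (x \in A); case: (x \in B); case: (x \in C). Qed.
Lemma clsignDl A B C : sg (sd A B) C = sg A C * sg B C.
Proof.
rewrite !clsignE; apply: (@sgn_eq _ _ _ _ (#|invs A C :&: invs B C| + #|(A :&: C) :&: (B :&: C)|)).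
rewrite invs_sdl sdIl.
have h1 := card_sd (invs A C) (invs B C). have h2 := card_sd (A :&: C) (B :&: C). lia.
Qed.
Lemma clsignDr A B C : sg A (sd B C) = sg A B * sg A C.
Proof.
rewrite !clsignE; apply: (@sgn_eq _ _ _ _ (#|invs A B :&: invs A C| + #|(A :&: B) :&: (A :&: C)|)).
rewrite invs_sdr sdIr.
have h1 := card_sd (invs A B) (invs A C). have h2 := card_sd (A :&: B) (A :&: C). lia.
Qed.
Lemma clsign_sq A B : sg A B * sg A B = 1.
Proof. by rewrite clsignE -exprD addnn -mul2n exprM sqrrN !expr1n. Qed.
Lemma clsign0l B : sg set0 B = 1.
Proof.
rewrite clsignE set0I cards0 addn0.
have -> : invs set0 B = set0 by apply/setP => p; rewrite !inE.
by rewrite cards0.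
Qed.
Lemma clsign0r B : sg B set0 = 1.
Proof.
rewrite clsignE setI0 cards0 addn0.
have -> : invs B set0 = set0 by apply/setP => p; rewrite !inE andbF.
by rewrite cards0.
Qed.

Lemma clmulE (x y : Cl) C :
  clmul x y C = \sum_A sg A (sd A C) * x A * y (sd A C).
Proof.
rewrite ffunE; apply: eq_bigr => A _.
by rewrite (big_pred1 (sd A C)) // => B; rewrite /= sd_eq.
Qed.

Lemma clmulA (x y z : Cl) : clmul (clmul x y) z = clmul x (clmul y z).
Proof.
apply/ffunP => D; rewrite !clmulE.
under eq_bigr do rewrite clmulE big_distrr big_distrl /=.
rewrite exchange_big /=; apply: eq_bigr => A _.
rewrite clmulE big_distrr /= (reindex_inj (inv_inj (sdK A))) /=.
apply: eq_bigr => B _; rewrite sdK.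
have -> : sd B (sd A D) = sd (sd A B) D by rewrite sdA (sdC B A).
rewrite !clsignDl !clsignDr.
have h := clsign_sq A B.
by rewrite -[RHS]mulr1 -h; ring.
Qed.

End Sign.
Section Ring.
Variables (R : realType) (n : nat).
Local Notation Cl := (Cl R n).
Local Notation sg := (@clsign R n).
Local Notation "x ** y" := (clmul x y) (at level 40, left associativity).
Local Notation "1" := (@clone R n).

Lemma claddE (x y : Cl) : cladd x y = x + y.
Proof. by apply/ffunP => A; rewrite !ffunE. Qed.
Lemma cloppE (x : Cl) : clopp x = - x.
Proof. by apply/ffunP => A; rewrite !ffunE. Qed.
Lemma clsubE (x y : Cl) : clsub x y = x - y.
Proof. by rewrite /clsub claddE cloppE. Qed.

Lemma clmul1l (x : Cl) : 1 ** x = x.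
Proof.
apply/ffunP => C; rewrite clmulE (bigD1 set0) //= big1 => [|A hA].
  by rewrite ffunE eqxx clsign0l mulr1 mul1r addr0 /sd setD0 set0D set0U.
by rewrite ffunE (negbTE hA) mulr0 mul0r.
Qed.
Lemma clmul1r (x : Cl) : x ** 1 = x.
Proof.
apply/ffunP => C; rewrite clmulE (bigD1 C) //= big1 => [|A hA].
  by rewrite sdv ffunE eqxx clsign0r mulr1 mul1r addr0.
by rewrite ffunE sd_eq0 (negbTE hA) mulr0.
Qed.
Lemma clmulDl (x y z : Cl) : (x + y) ** z = x ** z + y ** z.
Proof.
apply/ffunP => C; rewrite [RHS]ffunE !clmulE -big_split /=; apply: eq_bigr => A _.
by rewrite ffunE; ring.
Qed.
Lemma clmulDr (x y z : Cl) : x ** (y + z) = x ** y + x ** z.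
Proof.
apply/ffunP => C; rewrite [RHS]ffunE !clmulE -big_split /=; apply: eq_bigr => A _.
by rewrite ffunE; ring.
Qed.
Lemma clmulNl (x y : Cl) : (- x) ** y = - (x ** y).
Proof.
apply/ffunP => C; rewrite [RHS]ffunE !clmulE -sumrN; apply: eq_bigr => A _.
by rewrite ffunE; ring.
Qed.
Lemma clmulNr (x y : Cl) : x ** (- y) = - (x ** y).
Proof.
apply/ffunP => C; rewrite [RHS]ffunE !clmulE -sumrN; apply: eq_bigr => A _.
by rewrite ffunE; ring.
Qed.
Lemma clmulBl (x y z : Cl) : (x - y) ** z = x ** z - y ** z.
Proof. by rewrite clmulDl clmulNl. Qed.
Lemma clmulBr (x y z : Cl) : x ** (y - z) = x ** y - x ** z.
Proof. by rewrite clmulDr clmulNr. Qed.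
Lemma clmul0l (x : Cl) : 0 ** x = 0.
Proof. by apply/ffunP => C; rewrite [RHS]ffunE clmulE big1 // => A _; rewrite ffunE; ring. Qed.
Lemma clmul0r (x : Cl) : x ** 0 = 0.
Proof. by apply/ffunP => C; rewrite [RHS]ffunE clmulE big1 // => A _; rewrite ffunE; ring. Qed.
Lemma clmulZl k (x y : Cl) : (clscale k x) ** y = clscale k (x ** y).
Proof.
apply/ffunP => C; rewrite [RHS]ffunE !clmulE big_distrr /=; apply: eq_bigr => A _.
by rewrite ffunE; ring.
Qed.
Lemma clmulZr k (x y : Cl) : x ** (clscale k y) = clscale k (x ** y).
Proof.
apply/ffunP => C; rewrite [RHS]ffunE !clmulE big_distrr /=; apply: eq_bigr => A _.
by rewrite ffunE; ring.
Qed.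
Lemma clscaleA k l (x : Cl) : clscale k (clscale l x) = clscale (k * l) x.
Proof. by apply/ffunP => C; rewrite !ffunE mulrA. Qed.
Lemma clscale1 (x : Cl) : clscale 1%R x = x.
Proof. by apply/ffunP => C; rewrite !ffunE mul1r. Qed.
Lemma clscale0 (x : Cl) : clscale 0%R x = 0.
Proof. by apply/ffunP => C; rewrite !ffunE mul0r. Qed.
Lemma clscaleDr k (x y : Cl) : clscale k (x + y) = clscale k x + clscale k y.
Proof. by apply/ffunP => C; rewrite !ffunE mulrDr. Qed.
Lemma clscaleDl k l (x : Cl) : clscale (k + l) x = clscale k x + clscale l x.
Proof. by apply/ffunP => C; rewrite !ffunE mulrDl. Qed.
Lemma clscaleN k (x : Cl) : clscale k (- x) = - clscale k x.
Proof. by apply/ffunP => C; rewrite !ffunE mulrN. Qed.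
Lemma clscaleNl k (x : Cl) : clscale (- k) x = - clscale k x.
Proof. by apply/ffunP => C; rewrite !ffunE mulNr. Qed.
Lemma clscaleB k (x y : Cl) : clscale k (x - y) = clscale k x - clscale k y.
Proof. by rewrite clscaleDr clscaleN. Qed.
Lemma clscale_r0 k : clscale k (0 : Cl) = 0.
Proof. by apply/ffunP => C; rewrite !ffunE mulr0. Qed.
Definition scal (k : R) : Cl := clscale k 1.
Lemma scalE k (x : Cl) : scal k ** x = clscale k x.
Proof. by rewrite /scal clmulZl clmul1l. Qed.
Lemma scalE' k (x : Cl) : x ** scal k = clscale k x.
Proof. by rewrite /scal clmulZr clmul1r. Qed.
Lemma scal1 : scal 1%R = 1.
Proof. exact: clscale1. Qed.
Lemma scalM k l : scal k ** scal l = scal (k * l).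
Proof. by rewrite scalE /scal clscaleA. Qed.
Lemma clone_neq0 : (1 : Cl) != 0.
Proof. by apply/eqP => /ffunP /(_ set0); rewrite !ffunE eqxx => /eqP; rewrite oner_eq0. Qed.
Lemma scal_inj k l : scal k = scal l -> k = l.
Proof. by move=> /ffunP /(_ set0); rewrite !ffunE eqxx !mulr1. Qed.
End Ring.
Lemma sgn_eq2 (R : ringType) (a b k1 k2 : nat) : (a + 2 * k1 = b + 2 * k2)%N ->
  (-1) ^+ a = (-1) ^+ b :> R.
Proof.
move=> h.
have e : forall m k, (-1) ^+ (m + 2 * k) = (-1) ^+ m :> R.
  by move=> m k; rewrite exprD exprM sqrrN !expr1n mulr1.
by rewrite -(e a k1) h e.
Qed.
Lemma bin2D (p q : nat) : ('C(p + q, 2) = 'C(p, 2) + 'C(q, 2) + p * q)%N.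
Proof.
elim: q => [|q IH]; first by rewrite addn0 muln0 addn0 bin0n addn0.
rewrite addnS binS IH bin1 binS bin1. lia.
Qed.
Lemma bin2sq (k : nat) : (2 * 'C(k, 2) + k = k * k)%N.
Proof.
elim: k => [|k IH]; first by rewrite bin0n.
rewrite binS bin1. lia.
Qed.

Section Auto.
Variables (R : realType) (n : nat).
Local Notation Cl := (Cl R n).
Local Notation sg := (@clsign R n).
Local Notation "x ** y" := (clmul x y) (at level 40, left associativity).
Local Notation "1" := (@clone R n).

Definition tw (phi : {set 'I_n} -> R) (x : Cl) : Cl := [ffun A => phi A * x A].
Lemma twM phi (h1 : forall A B, phi (sd A B) = phi A * phi B) (h2 : forall A, phi A * phi A = 1%R)
  (x y : Cl) : tw phi (x ** y) = tw phi x ** tw phi y.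
Proof.
apply/ffunP => C; rewrite ffunE !clmulE big_distrr /=; apply: eq_bigr => A _.
rewrite !ffunE h1 -[LHS]mul1r -(h2 A); ring.
Qed.
Lemma twD phi (x y : Cl) : tw phi (x + y) = tw phi x + tw phi y.
Proof. by apply/ffunP => C; rewrite !ffunE mulrDr. Qed.
Lemma twN phi (x : Cl) : tw phi (- x) = - tw phi x.
Proof. by apply/ffunP => C; rewrite !ffunE mulrN. Qed.
Lemma twB phi (x y : Cl) : tw phi (x - y) = tw phi x - tw phi y.
Proof. by rewrite twD twN. Qed.
Lemma twZ phi k (x : Cl) : tw phi (clscale k x) = clscale k (tw phi x).
Proof. by apply/ffunP => C; rewrite !ffunE mulrCA. Qed.
Lemma tw1 phi (h : phi set0 = 1%R) : tw phi 1 = 1.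
Proof. by apply/ffunP => C; rewrite !ffunE; case: eqP => [->|]; rewrite ?h ?mulr0 ?mulr1. Qed.
Lemma twK phi (h2 : forall A, phi A * phi A = 1%R) (x : Cl) : tw phi (tw phi x) = x.
Proof. by apply/ffunP => C; rewrite !ffunE mulrA h2 mul1r. Qed.

Definition gph (A : {set 'I_n}) : R := (-1) ^+ #|A|.
Lemma gph_sd A B : gph (sd A B) = gph A * gph B.
Proof. rewrite /gph; apply: (@sgn_eq _ _ _ _ #|A :&: B|); exact: card_sd. Qed.
Lemma gph_sq A : gph A * gph A = 1%R.
Proof. by rewrite /gph -exprD addnn -mul2n exprM sqrrN !expr1n. Qed.
Lemma gph0 : gph set0 = 1%R.
Proof. by rewrite /gph cards0. Qed.

Definition eps (A : {set 'I_n}) : R := (-1) ^+ 'C(#|A|, 2).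
Lemma clrevE (x : Cl) A : clrev x A = eps A * x A.
Proof. by rewrite ffunE. Qed.

Definition X2 (A B : {set 'I_n}) :=
  [set p : 'I_n * 'I_n | (p.1 \in A) && (p.2 \in B) && (p.1 < p.2)%N].
Definition X3 (A B : {set 'I_n}) :=
  [set p : 'I_n * 'I_n | (p.1 \in A) && (p.2 \in B) && (p.1 == p.2)].
Lemma invs_count (A B : {set 'I_n}) : (#|invs A B| + #|invs B A| + #|A :&: B| = #|A| * #|B|)%N.
Proof.
have e2 : #|X2 A B| = #|invs B A|.
  have -> : X2 A B = [set (p.2, p.1) | p in invs B A].
    apply/setP => [[i j]]; rewrite [in LHS]inE /=; apply/idP/imsetP => [h|[[k l]]].
      by exists (j, i) => //; rewrite !inE /=; move: h; case: (i \in A); case: (j \in B).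
    by rewrite !inE /= => h [-> ->]; move: h; case: (k \in B); case: (l \in A).
  by apply: card_imset => [[i j] [k l]] /= [-> ->].
have e3 : #|X3 A B| = #|A :&: B|.
  have -> : X3 A B = [set (i, i) | i in A :&: B].
    apply/setP => [[i j]]; rewrite !inE /=; apply/idP/imsetP => [h|[k]].
      move: h => /andP [/andP [hi hj] /eqP e]; subst j.
      by exists i => //; rewrite !inE hi hj.
    by rewrite !inE => /andP [h1 h2] [-> ->]; rewrite h1 h2 eqxx.
  by apply: card_imset => i j [].
rewrite -e2 -e3 -cardsX.
have eX : setX A B = invs A B :|: X2 A B :|: X3 A B.
  apply/setP => [[i j]]; rewrite !inE /=.
  case: (i \in A); case: (j \in B) => //=.
  by case: (ltngtP i j) => [h|h|/val_inj ->]; rewrite ?eqxx ?orbT.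
have d12 : invs A B :&: X2 A B = set0.
  apply/setP => [[i j]]; rewrite !inE /=.
  by case: (ltngtP i j); rewrite ?andbF.
have d3 : (invs A B :|: X2 A B) :&: X3 A B = set0.
  apply/setP => [[i j]]; rewrite !inE /=.
  case: eqP => [->|]; last by rewrite !andbF.
  by rewrite ltnn !andbF.
rewrite eX. have h1 := cardsUI (invs A B) (X2 A B). have h2 := cardsUI (invs A B :|: X2 A B) (X3 A B).
rewrite d12 d3 cards0 !addn0 in h1 h2. by rewrite h2 h1.
Qed.
End Auto.
Section Rev.
Variables (R : realType) (n : nat).
Local Notation Cl := (Cl R n).
Local Notation sg := (@clsign R n).
Local Notation "x ** y" := (clmul x y) (at level 40, left associativity).
Local Notation "1" := (@clone R n).
Local Notation eps := (@eps R n).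
Local Notation gph := (@gph R n).
Local Notation scal := (@scal R n).

Lemma eps_sd (A B : {set 'I_n}) : eps (sd A B) * sg A B = sg B A * eps A * eps B :> R.
Proof.
rewrite /eps !clsignE -!exprD.
have hc := card_sd A B. have hi := invs_count A B.
have b1 := bin2D #|sd A B| (#|A :&: B| + #|A :&: B|).
have b2 := bin2D #|A :&: B| #|A :&: B|.
have b3 := bin2D #|A| #|B|.
have b4 := bin2sq #|A :&: B|.
have e : (#|sd A B| + (#|A :&: B| + #|A :&: B|) = #|A| + #|B|)%N by lia.
rewrite e in b1.
apply: (@sgn_eq2 _ _ _ (2 * 'C(#|A :&: B|, 2) + #|sd A B| * #|A :&: B|) #|invs A B|).
set m := #|sd A B| in hc b1 *. rewrite (setIC B A). set k := #|A :&: B| in hc hi b1 b2 b4 *.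
set p := #|A| in hc hi b1 b3 *. set q := #|B| in hc hi b1 b3 *.
set iab := #|invs A B| in hi *. set iba := #|invs B A| in hi *.
rewrite (mulnDr m k k) in b1.
set mk := (m * k)%N in b1 *. set pq := (p * q)%N in hi b3 *. set kk := (k * k)%N in b2 b4.
lia.
Qed.

Lemma clrevM (x y : Cl) : clrev (x ** y) = clrev y ** clrev x.
Proof.
apply/ffunP => C; rewrite clrevE !clmulE big_distrr /=.
rewrite (reindex_inj (h := fun A => sd A C)); last first.
  by move=> A B /= h; rewrite -(sdK C A) -(sdK C B) !(sdC C) h.
apply: eq_bigr => A _ /=.
have e : sd (sd A C) C = A by rewrite -sdA sdv sd0.
rewrite e !clrevE.
set B := sd A C in e *.
have eC : C = sd B A by rewrite /B sdC sdK.
rewrite {1}eC.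
have h := eps_sd B A.
transitivity (eps (sd B A) * sg B A * x B * y A); first ring.
rewrite h; ring.
Qed.
Lemma clrevD (x y : Cl) : clrev (x + y) = clrev x + clrev y.
Proof. by apply/ffunP => C; rewrite !ffunE mulrDr. Qed.
Lemma clrevN (x : Cl) : clrev (- x) = - clrev x.
Proof. by apply/ffunP => C; rewrite !ffunE mulrN. Qed.
Lemma clrevB (x y : Cl) : clrev (x - y) = clrev x - clrev y.
Proof. by rewrite clrevD clrevN. Qed.
Lemma clrevZ k (x : Cl) : clrev (clscale k x) = clscale k (clrev x).
Proof. by apply/ffunP => C; rewrite !ffunE mulrCA. Qed.
Lemma clrev1 : clrev 1 = 1.
Proof. by apply/ffunP => C; rewrite !ffunE; case: eqP => [->|]; rewrite ?cards0 ?mulr0 ?mulr1. Qed.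
Lemma clrevK (x : Cl) : clrev (clrev x) = x.
Proof. by apply/ffunP => C; rewrite !ffunE mulrA -exprD addnn -mul2n exprM sqrrN !expr1n mul1r. Qed.
Lemma clrev_scal k : clrev (scal k) = scal k.
Proof. by rewrite /scal clrevZ clrev1. Qed.

Definition gi (x : Cl) := tw gph x.
Lemma giM (x y : Cl) : gi (x ** y) = gi x ** gi y.
Proof. by apply: twM; [exact: gph_sd | exact: gph_sq]. Qed.
Lemma gi1 : gi 1 = 1.
Proof. by apply: tw1; exact: gph0. Qed.
Definition conj (x : Cl) := gi (clrev x).
Lemma conjM (x y : Cl) : conj (x ** y) = conj y ** conj x.
Proof. by rewrite /conj clrevM giM. Qed.
Lemma conjD (x y : Cl) : conj (x + y) = conj x + conj y.
Proof. by rewrite /conj clrevD /gi twD. Qed.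
Lemma conjN (x : Cl) : conj (- x) = - conj x.
Proof. by rewrite /conj clrevN /gi twN. Qed.
Lemma conjB (x y : Cl) : conj (x - y) = conj x - conj y.
Proof. by rewrite conjD conjN. Qed.
Lemma conjZ k (x : Cl) : conj (clscale k x) = clscale k (conj x).
Proof. by rewrite /conj clrevZ /gi twZ. Qed.
Lemma conj1 : conj 1 = 1.
Proof. by rewrite /conj clrev1 gi1. Qed.
Lemma conj_scal k : conj (scal k) = scal k.
Proof. by rewrite /scal conjZ conj1. Qed.
Lemma conjK (x : Cl) : conj (conj x) = x.
Proof.
apply/ffunP => C; rewrite !ffunE.
transitivity ((gph C * gph C) * ((-1) ^+ 'C(#|C|, 2) * (-1) ^+ 'C(#|C|, 2)) * x C); first ring.
by rewrite gph_sq -exprD addnn -mul2n exprM sqrrN !expr1n !mul1r.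
Qed.

Definition sc (x : Cl) : R := x set0.
Lemma scE (x y : Cl) : sc (x ** y) = \sum_A sg A A * x A * y A.
Proof. by rewrite /sc clmulE; apply: eq_bigr => A _; rewrite sd0. Qed.
Lemma sc_comm (x y : Cl) : sc (x ** y) = sc (y ** x).
Proof. by rewrite !scE; apply: eq_bigr => A _; ring. Qed.
Lemma sc_scal k : sc (scal k) = k.
Proof. by rewrite /sc /scal !ffunE eqxx mulr1. Qed.
Lemma scZ k (x : Cl) : sc (clscale k x) = k * sc x.
Proof. by rewrite /sc ffunE. Qed.

Lemma sgAA (A : {set 'I_n}) : sg A A * gph A * eps A = 1%R.
Proof.
rewrite clsignE /gph /eps setIid -!exprD.
have hi := invs_count A A. rewrite setIid in hi. have b := bin2sq #|A|.
apply: (@sgn_eq2 _ _ 0 0 (#|invs A A| + #|A|)).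
set p := #|A| in hi b *. set i := #|invs A A| in hi *. set pp := (p * p)%N in hi b. lia.
Qed.
Lemma sc_conj (z : Cl) : sc (conj z ** z) = \sum_A z A ^+ 2.
Proof.
rewrite scE; apply: eq_bigr => A _; rewrite !ffunE.
transitivity ((sg A A * gph A * eps A) * z A ^+ 2); first by rewrite /eps; ring.
by rewrite sgAA mul1r.
Qed.
Lemma clnormE (z : Cl) : clnorm z = Num.sqrt (sc (conj z ** z)).
Proof. by rewrite sc_conj. Qed.
Lemma sc_conj_ge0 (z : Cl) : 0 <= sc (conj z ** z).
Proof. by rewrite sc_conj; apply: sumr_ge0 => A _; exact: sqr_ge0. Qed.

Definition good (g : Cl) := exists l, conj g ** g = scal l /\ g ** conj g = scal l.

Lemma good_l (g : Cl) l : conj g ** g = scal l -> l = clnorm g ^+ 2.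
Proof. by move=> h; rewrite clnormE sqr_sqrtr ?sc_conj_ge0 // h sc_scal. Qed.

Lemma norm_mull (g z : Cl) : good g -> clnorm (g ** z) = clnorm g * clnorm z.
Proof.
move=> [l [h1 h2]]; have hl := good_l h1.
rewrite !clnormE conjM -clmulA (clmulA (conj z) (conj g) g) h1 scalE' clmulZl scZ sc_scal.
rewrite sqrtrM //; rewrite hl; exact: sqr_ge0.
Qed.
Lemma norm_mulr (g z : Cl) : good g -> clnorm (z ** g) = clnorm z * clnorm g.
Proof.
move=> [l [h1 h2]]; have hl := good_l h1.
rewrite !clnormE conjM clmulA sc_comm !clmulA h2 scalE' !clmulZr scZ h1 sc_scal.
rewrite mulrC sqrtrM //; exact: sc_conj_ge0.
Qed.
Lemma good_mul (g h : Cl) : good g -> good h -> good (g ** h).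
Proof.
move=> [l [g1 g2]] [m [h1 h2]]; exists (l * m); rewrite conjM; split.
  by rewrite -clmulA (clmulA (conj h) (conj g) g) g1 scalE' clmulZl h1 -scalE scalM.
by rewrite -clmulA (clmulA g h (conj h)) h2 scalE' clmulZl g2 -scalE scalM mulrC.
Qed.
Lemma good_scal k : good (scal k).
Proof. by exists (k * k); rewrite conj_scal scalM. Qed.
Lemma good1 : good 1.
Proof. by rewrite -scal1; exact: good_scal. Qed.
Lemma clnorm1 : clnorm 1 = 1%R.
Proof.
rewrite /clnorm (bigD1 set0) //= big1 => [|A hA]; first by rewrite ffunE eqxx addr0 expr1n sqrtr1.
by rewrite ffunE (negbTE hA) expr0n.
Qed.
End Rev.
Section Vec.
Variables (R : realType) (n : nat).
Local Notation Cl := (Cl R n).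
Local Notation sg := (@clsign R n).
Local Notation "x ** y" := (clmul x y) (at level 40, left associativity).
Local Notation "1" := (@clone R n).
Local Notation eps := (@eps R n).
Local Notation gph := (@gph R n).
Local Notation scal := (@scal R n).

Lemma bT : (true%:R : R) = 1%R. Proof. by []. Qed.
Lemma bF : (false%:R : R) = 0%R. Proof. by []. Qed.

Definition isinv (x y : Cl) := x ** y = 1 /\ y ** x = 1.
Lemma clinv_eq (x y : Cl) : isinv x y -> clinv x = y.
Proof.
move=> [h1 h2].
have ex : exists y, x ** y = 1 /\ y ** x = 1 by exists y.
have [e1 e2] := epsilon_spec (inhabits 1) _ ex.
rewrite /clinv; set y' := epsilon _ _ in e1 e2 *.
by rewrite -[y']clmul1r -h1 -clmulA e2 clmul1l.
Qed.
Lemma isinv_mul (x x' y y' : Cl) : isinv x x' -> isinv y y' -> isinv (x ** y) (y' ** x').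
Proof.
move=> [h1 h2] [h3 h4]; split.
  by rewrite -clmulA (clmulA x y y') h3 clmul1r h1.
by rewrite -clmulA (clmulA y' x' x) h2 clmul1r h4.
Qed.
Lemma isinv_sym (x y : Cl) : isinv x y -> isinv y x.
Proof. by move=> [h1 h2]. Qed.

Lemma clnorm_ge0 (x : Cl) : 0 <= clnorm x.
Proof. exact: sqrtr_ge0. Qed.
Lemma clnorm_eq0 (x : Cl) : (clnorm x == 0) = (x == 0).
Proof.
rewrite /clnorm sqrtr_eq0 le_eqVlt.
have h : 0 <= \sum_A x A ^+ 2 by apply: sumr_ge0 => A _; exact: sqr_ge0.
rewrite ltNge h orbF psumr_eq0 => [|A _]; last exact: sqr_ge0.
apply/allP/eqP => [H|-> A _]; last by rewrite /= ffunE expr0n.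
apply/ffunP => A; rewrite ffunE; apply/eqP; rewrite -sqrf_eq0.
by have := H A (mem_index_enum _); rewrite implyTb.
Qed.

Lemma good_inv (g : Cl) : good g -> g != 0 ->
  isinv g (clscale ((clnorm g ^+ 2)^-1) (conj g)).
Proof.
move=> [l [h1 h2]] gn0; have hl := good_l h1.
have hn : clnorm g ^+ 2 != 0 by rewrite sqrf_eq0 clnorm_eq0.
split.
  by rewrite clmulZr h2 hl /scal clscaleA mulVf // clscale1.
by rewrite clmulZl h1 hl /scal clscaleA mulVf // clscale1.
Qed.
Lemma good_clscale k (g : Cl) : good g -> good (clscale k g).
Proof. by move=> h; rewrite -scalE; apply: good_mul => //; exact: good_scal. Qed.
Lemma good_conj (g : Cl) : good g -> good (conj g).
Proof. by move=> [l [h1 h2]]; exists l; rewrite conjK. Qed.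
Lemma good_inv_good (g : Cl) : good g -> g != 0 -> good (clinv g).
Proof.
move=> h hn; rewrite (clinv_eq (good_inv h hn)).
by apply: good_clscale; exact: good_conj.
Qed.
Lemma isinv_good (g : Cl) : good g -> g != 0 -> isinv g (clinv g).
Proof. by move=> h hn; rewrite (clinv_eq (good_inv h hn)); exact: good_inv. Qed.
Lemma norm_inv (g : Cl) : good g -> g != 0 -> clnorm (clinv g) = (clnorm g)^-1.
Proof.
move=> h hn; have [e1 _] := isinv_good h hn.
have := congr1 (@clnorm R n) e1; rewrite norm_mull // clnorm1 => e.
have hn' : clnorm g != 0 by rewrite clnorm_eq0.
by rewrite -[clnorm (clinv g)]mul1r -(mulVf hn') -mulrA e mulr1.
Qed.

Definition dot (v w : 'I_n -> R) : R := \sum_i v i * w i.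
Lemma clvec_single (v : 'I_n -> R) i : clvec v [set i] = v i.
Proof.
rewrite ffunE (bigD1 i) //= eqxx mul1r big1 ?addr0 // => j hj.
case: eqP => [/setP h|]; last by rewrite mul0r.
by move: (h i); rewrite !inE eqxx eq_sym (negbTE hj).
Qed.
Lemma clvec_out (v : 'I_n -> R) (A : {set 'I_n}) : #|A| != 1%N -> clvec v A = 0.
Proof.
move=> h; rewrite ffunE big1 // => i _; case: eqP => [e|]; last by rewrite mul0r.
by move: h; rewrite e cards1.
Qed.
Lemma clvecD (v w : 'I_n -> R) : clvec (fun i => v i + w i) = clvec v + clvec w.
Proof. by apply/ffunP => A; rewrite !ffunE -big_split; apply: eq_bigr => i _; rewrite mulrDr. Qed.
Lemma clvecN (v : 'I_n -> R) : clvec (fun i => - v i) = - clvec v.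
Proof. by apply/ffunP => A; rewrite !ffunE -sumrN; apply: eq_bigr => i _; rewrite mulrN. Qed.
Lemma clvecB (v w : 'I_n -> R) : clvec (fun i => v i - w i) = clvec v - clvec w.
Proof. by rewrite clvecD clvecN. Qed.
Lemma clvecZ k (v : 'I_n -> R) : clvec (fun i => k * v i) = clscale k (clvec v).
Proof. by apply/ffunP => A; rewrite !ffunE big_distrr; apply: eq_bigr => i _ /=; rewrite mulrCA. Qed.
Lemma clvec0 : clvec (fun _ => 0) = 0 :> Cl.
Proof. by apply/ffunP => A; rewrite !ffunE big1 // => i _; rewrite mulr0. Qed.

Lemma card1E (A : {set 'I_n}) : #|A| = 1%N -> eps A = 1%R /\ gph A = -1%R.
Proof. by move=> h; rewrite /eps /gph h expr1. Qed.
Lemma clrev_vec (v : 'I_n -> R) : clrev (clvec v) = clvec v.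
Proof.
apply/ffunP => A; rewrite clrevE; case: (eqVneq #|A| 1%N) => h.
  by rewrite (card1E h).1 mul1r.
by rewrite clvec_out // mulr0.
Qed.
Lemma conj_vec (v : 'I_n -> R) : conj (clvec v) = - clvec v.
Proof.
rewrite /conj clrev_vec; apply/ffunP => A.
have e1 : forall (x : Cl), (- x) A = - x A by move=> x; rewrite ffunE.
have e2 : forall (x : Cl), gi x A = gph A * x A by move=> x; rewrite ffunE.
rewrite e1 e2.
case: (eqVneq #|A| 1%N) => h.
  by rewrite (card1E h).2 mulN1r.
by rewrite clvec_out // mulr0 oppr0.
Qed.

Lemma sg_single (i j : 'I_n) : sg [set i] [set j] = (-1) ^+ ((j < i)%N + (i == j)).
Proof.
rewrite clsignE; congr (_ ^+ (_ + _)).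
  case: (ltnP j i) => h.
    have -> : invs [set i] [set j] = [set (i, j)].
      apply/setP => [[k l]]; rewrite !inE /= xpair_eqE.
      by case: eqP => [->|]; case: eqP => [->|] //=; rewrite h.
    by rewrite cards1.
  have -> : invs [set i] [set j] = set0.
    apply/setP => [[k l]]; rewrite !inE /=.
    by case: eqP => [->|]; case: eqP => [->|] //=; rewrite ltnNge h.
  by rewrite cards0.
case: eqP => [->|h]; first by rewrite setIid cards1.
have -> : [set i] :&: [set j] = set0.
  apply/setP => k; rewrite !inE; case: eqP => [->|] //=; case: eqP => // e; by case: h.
by rewrite cards0.
Qed.

Lemma clvec_mulE (v w : 'I_n -> R) C :
  (clvec v ** clvec w) C = \sum_i \sum_j (C == sd [set i] [set j])%:R * sg [set i] [set j] * v i * w j.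
Proof.
rewrite clmulE.
have e : forall A, sg A (sd A C) * clvec v A * clvec w (sd A C) =
  \sum_i \sum_j sg A (sd A C) * ((A == [set i])%:R * v i) * ((sd A C == [set j])%:R * w j).
  move=> A; rewrite !ffunE [sg A (sd A C) * _]mulr_sumr mulr_suml; apply: eq_bigr => i _.
  by rewrite mulr_sumr.
under eq_bigr => A _ do rewrite e.
rewrite exchange_big /=; apply: eq_bigr => i _.
rewrite exchange_big /=; apply: eq_bigr => j _.
rewrite (bigD1 [set i]) //= big1 => [|A hA]; last by rewrite (negbTE hA) !mul0r mulr0 mul0r.
rewrite eqxx addr0 sd_eq (eq_sym C).
case: eqP => [<-|]; last by rewrite mul0r !mulr0 !mul0r.
rewrite sdK; have t1 : (true%:R : R) = 1%R by []. by rewrite t1; ring.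
Qed.

Lemma sg_pair (i j : 'I_n) :
  sg [set i] [set j] + sg [set j] [set i] = if i == j then -2 else 0.
Proof.
rewrite !sg_single (eq_sym j i).
case: (eqVneq i j) => [<-|hij]; first by rewrite ltnn /= expr1; ring.
rewrite !addn0.
case: (ltngtP i j) => h /=; last by move: hij; rewrite (val_inj h) eqxx.
- by rewrite expr0 expr1; ring.
- by rewrite expr0 expr1; ring.
Qed.

Lemma vec_anti (v w : 'I_n -> R) :
  clvec v ** clvec w + clvec w ** clvec v = scal (-2 * dot v w).
Proof.
apply/ffunP => C; rewrite [LHS]ffunE !clvec_mulE.
rewrite [X in _ + X]exchange_big /= -big_split /=.
under eq_bigr => i _ do rewrite -big_split /=.
have e : forall i j, (C == sd [set i] [set j])%:R * sg [set i] [set j] * v i * w j +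
   (C == sd [set j] [set i])%:R * sg [set j] [set i] * w j * v i =
   (C == set0)%:R * ((i == j)%:R * (-2 * (v i * w j))) :> R.
  move=> i j; rewrite (sdC [set j] [set i]).
  transitivity ((C == sd [set i] [set j])%:R * (sg [set i] [set j] + sg [set j] [set i]) * v i * w j); first ring.
  rewrite sg_pair; case: (eqVneq i j) => [<-|hij]; first by rewrite sdv bT; ring.
  by rewrite bF; ring.
under eq_bigr => i _ do under eq_bigr => j _ do rewrite e.
rewrite /scal ffunE ffunE /dot mulr_sumr [RHS]mulrC mulr_sumr.
apply: eq_bigr => i _.
rewrite (bigD1 i) //= big1 => [|j hj]; first by rewrite eqxx bT addr0; ring.
by rewrite (eq_sym i j) (negbTE hj) bF; ring.
Qed.

Lemma clscale_inj k (x y : Cl) : k != 0 -> clscale k x = clscale k y -> x = y.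
Proof.
move=> hk e; apply/ffunP => C; have := congr1 (fun z : Cl => z C) e; rewrite !ffunE.
by move/(mulfI hk).
Qed.
Lemma vec_sq (v : 'I_n -> R) : clvec v ** clvec v = scal (- dot v v).
Proof.
have h := vec_anti v v.
have e2 : forall x : Cl, x + x = clscale 2 x by move=> x; apply/ffunP => C; rewrite !ffunE mulrDl mul1r.
rewrite e2 in h.
apply: (@clscale_inj 2); first by rewrite pnatr_eq0.
rewrite h /scal !clscaleA; congr clscale; ring.
Qed.
End Vec.
Lemma clvec_ext (R : realType) (n : nat) (v w : 'I_n -> R) :
  (forall i, v i = w i) -> clvec v = clvec w :> Cl R n.
Proof. by move=> h; apply/ffunP => A; rewrite !ffunE; apply: eq_bigr => i _; rewrite h. Qed.

Section Hat.
Variables (R : realType) (n : nat) (l : 'I_n).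
Hypothesis hl : forall i : 'I_n, is_last i = (i == l).
Local Notation Cl := (Cl R n).
Local Notation sg := (@clsign R n).
Local Notation "x ** y" := (clmul x y) (at level 40, left associativity).
Local Notation "1" := (@clone R n).
Local Notation scal := (@scal R n).

Definition hph (A : {set 'I_n}) : R := if l \in A then (-1)%R else 1%R.
Lemma hatE (x : Cl) : clhat x = tw hph x.
Proof.
apply/ffunP => A; rewrite !ffunE /hph.
have -> : [exists i, (i \in A) && is_last i] = (l \in A).
  apply/existsP/idP => [[i /andP [hi]]|h]; first by rewrite hl => /eqP <-.
  by exists l; rewrite h hl eqxx.
by case: (l \in A); rewrite ?mulN1r ?mul1r.
Qed.
Lemma hph_sd A B : hph (sd A B) = hph A * hph B.
Proof. by rewrite /hph in_sd; case: (l \in A); case: (l \in B); rewrite /= ?mulN1r ?opprK ?mul1r. Qed.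
Lemma hph_sq A : hph A * hph A = 1%R.
Proof. by rewrite /hph; case: (l \in A); rewrite ?mulN1r ?opprK ?mul1r. Qed.
Lemma hatM (x y : Cl) : clhat (x ** y) = clhat x ** clhat y.
Proof. by rewrite !hatE; apply: twM; [exact: hph_sd | exact: hph_sq]. Qed.
Lemma hatD (x y : Cl) : clhat (x + y) = clhat x + clhat y.
Proof. by rewrite !hatE twD. Qed.
Lemma hatN (x : Cl) : clhat (- x) = - clhat x.
Proof. by rewrite !hatE twN. Qed.
Lemma hatB (x y : Cl) : clhat (x - y) = clhat x - clhat y.
Proof. by rewrite hatD hatN. Qed.
Lemma hatZ k (x : Cl) : clhat (clscale k x) = clscale k (clhat x).
Proof. by rewrite !hatE twZ. Qed.
Lemma hat1 : clhat 1 = 1.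
Proof. by rewrite hatE; apply: tw1; rewrite /hph inE. Qed.
Lemma hatK (x : Cl) : clhat (clhat x) = x.
Proof. by rewrite !hatE twK //; exact: hph_sq. Qed.
Lemma hat_isinv (x y : Cl) : isinv x y -> isinv (clhat x) (clhat y).
Proof. by move=> [h1 h2]; split; rewrite -hatM ?h1 ?h2 hat1. Qed.
Lemma hat_clinv (x y : Cl) : isinv x y -> clhat (clinv x) = clinv (clhat x).
Proof. by move=> h; rewrite (clinv_eq h) (clinv_eq (hat_isinv h)). Qed.
Lemma norm_hat (x : Cl) : clnorm (clhat x) = clnorm x.
Proof.
rewrite hatE /clnorm; congr Num.sqrt; apply: eq_bigr => A _.
by rewrite ffunE exprMn [hph A ^+ 2]expr2 hph_sq mul1r.
Qed.
Lemma norm_opp (x : Cl) : clnorm (- x) = clnorm x.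
Proof. by rewrite /clnorm; congr Num.sqrt; apply: eq_bigr => A _; rewrite ffunE sqrrN. Qed.

Definition hatv (v : 'I_n -> R) := fun i => if is_last i then - v i else v i.
Lemma hat_vec (v : 'I_n -> R) : clhat (clvec v) = clvec (hatv v).
Proof.
rewrite hatE; apply/ffunP => A; rewrite !ffunE mulr_sumr; apply: eq_bigr => i _.
rewrite /hph /hatv hl; case: eqP => [->|]; last by rewrite !mul0r mulr0.
rewrite !inE bT !mul1r (eq_sym l i).
by case: eqP => _; rewrite ?mulN1r ?mul1r.
Qed.
Lemma hat_vecR (v : 'I_n -> R) : in_Rn1 v -> clhat (clvec v) = clvec v.
Proof.
move=> h; rewrite hat_vec; apply: clvec_ext => i; rewrite /hatv.
by case: ifP => // /h ->; rewrite oppr0.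
Qed.

Definition lastc (x : Cl) : R := x [set l].
Lemma lastc_vec (v : 'I_n -> R) : lastc (clvec v) = v l.
Proof. exact: clvec_single. Qed.
Lemma lastcD (x y : Cl) : lastc (x + y) = lastc x + lastc y.
Proof. by rewrite /lastc ffunE. Qed.
Lemma lastcN (x : Cl) : lastc (- x) = - lastc x.
Proof. by rewrite /lastc ffunE. Qed.
Lemma lastcB (x y : Cl) : lastc (x - y) = lastc x - lastc y.
Proof. by rewrite lastcD lastcN. Qed.
Lemma lastcZ k (x : Cl) : lastc (clscale k x) = k * lastc x.
Proof. by rewrite /lastc ffunE. Qed.
Lemma lastc_hat (x : Cl) : lastc (clhat x) = - lastc x.
Proof. by rewrite hatE /lastc ffunE /hph inE eqxx mulN1r. Qed.
Lemma lastc_neq0 (x : Cl) : lastc x != 0 -> x != 0.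
Proof. by apply: contraNneq => ->; rewrite /lastc ffunE. Qed.
End Hat.

Section VP.
Variables (R : realType) (n : nat).
Local Notation Cl := (Cl R n).
Local Notation "x ** y" := (clmul x y) (at level 40, left associativity).
Local Notation "1" := (@clone R n).
Local Notation scal := (@scal R n).

Definition isvec (z : Cl) := exists w, z = clvec w.
Lemma isvecD (x y : Cl) : isvec x -> isvec y -> isvec (x + y).
Proof. by move=> [v ->] [w ->]; exists (fun i => v i + w i); rewrite clvecD. Qed.
Lemma isvecN (x : Cl) : isvec x -> isvec (- x).
Proof. by move=> [v ->]; exists (fun i => - v i); rewrite clvecN. Qed.
Lemma isvecB (x y : Cl) : isvec x -> isvec y -> isvec (x - y).
Proof. by move=> hx hy; apply: isvecD => //; exact: isvecN. Qed.
Lemma isvecZ k (x : Cl) : isvec x -> isvec (clscale k x).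
Proof. by move=> [v ->]; exists (fun i => k * v i); rewrite clvecZ. Qed.
Lemma isvec_hat l (hl : forall i : 'I_n, is_last i = (i == l)) (x : Cl) : isvec x -> isvec (clhat x).
Proof. by move=> [v ->]; exists (hatv v); rewrite (hat_vec hl). Qed.
Lemma conj_isvec (x : Cl) : isvec x -> conj x = - x.
Proof. by move=> [v ->]; exact: conj_vec. Qed.
Lemma isvec_sq (x : Cl) : isvec x -> exists k, x ** x = scal k.
Proof. by move=> [v ->]; exists (- dot v v); exact: vec_sq. Qed.
Lemma good_vec (x : Cl) : isvec x -> good x.
Proof.
move=> hx; have [k hk] := isvec_sq hx; exists (- k).
rewrite conj_isvec // clmulNl clmulNr hk; split; apply/ffunP => C; rewrite !ffunE; ring.
Qed.

Definition vp (s : seq ('I_n -> R)) : Cl := foldr (@clmul R n) 1 (map (@clvec R n) s).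
Definition mu (s : seq ('I_n -> R)) : R := foldr (fun v m => - dot v v * m) 1%R s.
Lemma vp_cons v s : vp (v :: s) = clvec v ** vp s.
Proof. by []. Qed.
Lemma vp_nil : vp [::] = 1.
Proof. by []. Qed.
Lemma vp_good s : good (vp s).
Proof.
elim: s => [|v s IH]; first exact: good1.
by rewrite vp_cons; apply: good_mul => //; apply: good_vec; exists v.
Qed.
Lemma vp_rev s : clrev (vp s) ** vp s = scal (mu s) /\ vp s ** clrev (vp s) = scal (mu s).
Proof.
elim: s => [|v s [IH1 IH2]]; first by rewrite vp_nil clrev1 clmul1l scal1.
rewrite vp_cons clrevM clrev_vec /=; split.
  by rewrite -clmulA (clmulA (clrev (vp s))) vec_sq scalE' clmulZl IH1 -scalE scalM.
by rewrite -clmulA (clmulA (clvec v) (vp s)) IH2 scalE' clmulZl vec_sq -scalE scalM mulrC.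
Qed.
Lemma dot0 (v : 'I_n -> R) : dot v v = 0 -> clvec v = 0.
Proof.
move=> h; have e : forall i, v i * v i = 0.
  move=> i; apply: (psumr_eq0P _ h) => // j _; rewrite -expr2; exact: sqr_ge0.
rewrite -clvec0; apply: clvec_ext => i; apply/eqP; rewrite -sqrf_eq0 expr2; exact/eqP.
Qed.
Lemma vp_cases s : vp s = 0 \/ mu s != 0.
Proof.
elim: s => [|v s [IH|IH]]; first by right; rewrite /= oner_eq0.
  by left; rewrite vp_cons IH clmul0r.
case: (eqVneq (dot v v) 0) => h.
  by left; rewrite vp_cons dot0 // clmul0l.
by right; rewrite /= mulf_neq0 // oppr_eq0.
Qed.
End VP.
Ltac zsolve := apply/ffunP => ?; rewrite !ffunE; ring.

Section Main.
Variables (R : realType) (n : nat) (l : 'I_n).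
Hypothesis hl : forall i : 'I_n, is_last i = (i == l).
Local Notation Cl := (Cl R n).
Local Notation "x ** y" := (clmul x y) (at level 40, left associativity).
Local Notation "1" := (@clone R n).
Local Notation scal := (@scal R n).
Local Notation hat := (@clhat R n).
Local Notation lastc := (@lastc R n l).

Variables (a b c d : Cl) (s : R).
Hypotheses (ga : good a) (gc : good c) (gd : good d).
Hypotheses (ha : hat a = a) (hb : hat b = b) (hc : hat c = c) (hd : hat d = d).
Hypothesis hs : s != 0.
Hypothesis hdet : clrev a ** d - clrev b ** c = scal s.
Hypotheses (hU : isvec (clrev a ** c)) (hV : isvec (clrev c ** d)).
Hypotheses (hVh : hat (clrev c ** d) = clrev c ** d) (hVl : lastc (clrev c ** d) = 0).
Hypothesis hcc : c = 0 \/ exists mu, mu != 0 /\ clrev c ** c = scal mu /\ c ** clrev c = scal mu.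

Definition psi (z : Cl) := (a ** z + b) ** clinv (c ** z + d).

Lemma isinv_neq0 (x y : Cl) : isinv x y -> x != 0.
Proof. by move=> [h _]; apply/eqP => e; move: h; rewrite e clmul0l => /esym /eqP; rewrite (negbTE (clone_neq0 _ _)). Qed.

Lemma scal_neq0 k : k != 0 -> scal k != 0.
Proof. by move=> hk; apply: contraNneq hk => /ffunP /(_ set0); rewrite !ffunE eqxx mulr1 => ->. Qed.

Lemma d_neq0 : c = 0 -> d != 0.
Proof.
move=> c0; apply/eqP => d0; move: hdet; rewrite c0 d0 !clmul0r subrr => /esym.
by move/eqP; rewrite (negbTE (scal_neq0 hs)).
Qed.
Lemma a_neq0 : c = 0 -> a != 0.
Proof.
move=> c0; apply/eqP => a0; move: hdet; rewrite c0 a0 !clmul0r.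
have -> : clrev 0 = 0 :> Cl by apply/ffunP => C; rewrite !ffunE mulr0.
rewrite clmul0l subrr => /esym.
by move/eqP; rewrite (negbTE (scal_neq0 hs)).
Qed.

Lemma vec_inv (z : Cl) : isvec z -> lastc z != 0 -> good z /\ z != 0.
Proof. by move=> hz h; split; [exact: good_vec | exact: lastc_neq0 h]. Qed.

Lemma X_good (z : Cl) : isvec z -> lastc z != 0 -> good (c ** z + d) /\ c ** z + d != 0.
Proof.
move=> hz hz0; case: hcc => [c0|[mu [hmu1 [hmu2 hmu3]]]].
  by rewrite c0 clmul0l add0r; split; [exact: gd | exact: d_neq0].
set v := clscale (mu^-1) (clrev c ** d).
have dv : d = c ** v.
  by rewrite /v clmulZr -clmulA hmu3 scalE clscaleA mulVf // clscale1.
have hv : isvec v by apply: isvecZ.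
have lv : lastc v = 0.
  by rewrite /v lastcZ hVl mulr0.
have e : c ** z + d = c ** (z + v) by rewrite dv clmulDr.
have hzv : isvec (z + v) by apply: isvecD.
have nzv : lastc (z + v) != 0 by rewrite lastcD lv addr0.
have [gzv zv0] := vec_inv hzv nzv.
rewrite e; split; first exact: good_mul.
have c0 : c != 0.
  apply/eqP => c0; move: hmu2; rewrite c0 clmul0r => /esym /eqP; rewrite (negbTE (scal_neq0 hmu1)) //.
apply: (@isinv_neq0 _ (clinv (z + v) ** clinv c)).
by apply: isinv_mul; apply: isinv_good.
Qed.

Lemma claim1 (y : Cl) : isvec y -> lastc y != 0 -> psi (hat y) = hat (psi y).
Proof.
move=> hy hy0; have [gX X0] := X_good hy hy0.
rewrite /psi (hatM hl) (hat_clinv hl (isinv_good gX X0)).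
by rewrite !(hatD hl) !(hatM hl) ha hb hc hd.
Qed.

Lemma norm_mul (g h : Cl) : good g -> good h -> clnorm (g ** h) = clnorm g * clnorm h.
Proof. by move=> hg _; exact: norm_mull. Qed.

Lemma subDr (u w z : Cl) : (u + z) - (w + z) = u - w.
Proof. by rewrite opprD addrACA subrr addr0. Qed.

Local Notation en := (@en R n).
Lemma good_en : good en.
Proof. by apply: good_vec; eexists. Qed.

Lemma Cxy_base (x y : Cl) : isvec x -> isvec y -> lastc (x - hat y) != 0 ->
  clnorm (Cxy x y) = clnorm en * clnorm (x - y) * (clnorm (x - hat y))^-1.
Proof.
move=> hx hy h0.
have hw : isvec (x - hat y) by apply: isvecB => //; exact: isvec_hat hl _ hy.
have [gw w0] := vec_inv hw h0.
have gxy : good (x - y) by apply: good_vec; exact: isvecB.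
rewrite /Cxy !clsubE norm_mul ?norm_mul ?norm_inv //; last exact: good_inv_good.
  exact: good_en.
by apply: good_mul => //; exact: good_en.
Qed.

Lemma case0 (c0 : c = 0) (x y : Cl) : isvec x -> isvec y -> 0 < lastc x -> 0 < lastc y ->
  clnorm (Cxy (psi x) (psi y)) = clnorm en * clnorm (x - y) * (clnorm (x - hat y))^-1.
Proof.
move=> hx hy lx ly.
have ly0 : lastc y != 0 by rewrite gt_eqF.
have hq := claim1 hy ly0.
have ep : forall z, psi z = (a ** z + b) ** clinv d.
  by move=> z; rewrite /psi c0 clmul0l add0r.
have hyh : isvec (hat y) by exact: isvec_hat hl _ hy.
have hw : isvec (x - hat y) by apply: isvecB.
have h0 : lastc (x - hat y) != 0.
  by rewrite lastcB (lastc_hat hl) opprK gt_eqF // addr_gt0.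
have [gw w0] := vec_inv hw h0.
have gxy : good (x - y) by apply: good_vec; exact: isvecB.
have a0 := a_neq0 c0. have d0 := d_neq0 c0.
have e1 : psi x - psi y = a ** (x - y) ** clinv d.
  by rewrite !ep -clmulBl subDr -clmulBr.
have e2 : psi x - hat (psi y) = a ** (x - hat y) ** clinv d.
  by rewrite -hq !ep -clmulBl subDr -clmulBr.
have iv : isinv (a ** (x - hat y) ** clinv d) (d ** (clinv (x - hat y) ** clinv a)).
  apply: isinv_mul; last exact/isinv_sym/isinv_good.
  by apply: isinv_mul; apply: isinv_good.
have gia := good_inv_good ga a0. have gid := good_inv_good gd d0.
have giw := good_inv_good gw w0.
rewrite /Cxy !clsubE e1 e2 (clinv_eq iv).
rewrite !norm_mul; try by repeat first [assumption | exact: good_en | apply: good_mul].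
rewrite !norm_inv //.
have na : clnorm a != 0 by rewrite clnorm_eq0.
have nd : clnorm d != 0 by rewrite clnorm_eq0.
have nw : clnorm (x - hat y) != 0 by rewrite clnorm_eq0.
by field; rewrite na nd nw.
Qed.

Section Case1.
Variable mu : R.
Hypotheses (hmu1 : mu != 0) (hmu2 : clrev c ** c = scal mu) (hmu3 : c ** clrev c = scal mu).
Definition vv := clscale (mu^-1) (clrev c ** d).
Definition KK := b - a ** vv.
Definition UU := clrev a ** c.
Definition GG := vv ** UU - UU ** vv - scal s.

Lemma dv : d = c ** vv.
Proof. by rewrite /vv clmulZr -clmulA hmu3 scalE clscaleA mulVf // clscale1. Qed.
Lemma isvec_v : isvec vv.
Proof. exact: isvecZ. Qed.
Lemma lastc_v : lastc vv = 0.
Proof. by rewrite /vv lastcZ hVl mulr0. Qed.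
Lemma hat_v : hat vv = vv.
Proof. by rewrite /vv (hatZ hl) hVh. Qed.
Lemma c_neq0 : c != 0.
Proof.
apply/eqP => c0; move: hmu2; rewrite c0 clmul0r => /esym /eqP.
by rewrite (negbTE (scal_neq0 hmu1)).
Qed.

Lemma revc_K : clrev c ** KK = GG.
Proof.
have e1 : clrev c ** a = UU.
  have [w ew] := hU.
  by rewrite -[RHS]clrevK /UU ew clrev_vec -ew clrevM clrevK.
have e2 : clrev b ** c = clrev a ** d - scal s.
  by rewrite -hdet opprB addrC subrK.
have e3 : clrev d = vv ** clrev c.
  by have [w ew] := isvec_v; rewrite dv clrevM ew clrev_vec.
have e4 : clrev c ** b = vv ** UU - scal s.
  have -> : clrev c ** b = clrev (clrev b ** c) by rewrite clrevM clrevK.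
  by rewrite e2 clrevB clrevM clrevK e3 clrev_scal clmulA e1.
by rewrite /KK clmulBr e4 -clmulA e1 /GG; zsolve.
Qed.

Definition ci' := clscale (mu^-1) c.
Lemma K_eq : KK = ci' ** GG.
Proof.
have h : ci' ** clrev c = 1 by rewrite /ci' clmulZl hmu3 /scal clscaleA mulVf // clscale1.
by rewrite -revc_K -clmulA h clmul1l.
Qed.

Lemma sc_sub (x y : Cl) : sc (x - y) = sc x - sc y.
Proof. by rewrite /sc !ffunE. Qed.

Lemma G_neq0 : GG != 0.
Proof.
apply/eqP => h; have := congr1 (@sc R n) h.
rewrite /GG !sc_sub sc_comm subrr sub0r sc_scal /sc ffunE => /eqP.
by rewrite oppr_eq0 (negbTE hs).
Qed.

Lemma G_good : good GG.
Proof.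
have [wv ev] := isvec_v.
have [wu eu] := hU.
case: (eqVneq UU 0) => [U0|U0].
  rewrite /GG U0 clmul0l clmul0r subrr sub0r.
  have -> : - scal s = scal (- s) by zsolve.
  exact: good_scal.
set k := - dot wu wu.
have hk : UU ** UU = scal k by rewrite /UU eu vec_sq.
have k0 : k != 0.
  rewrite oppr_eq0; apply/eqP => h; move: U0; rewrite /UU eu dot0 // eqxx //.
set m := -2 * dot wv wu.
have hm : vv ** UU = scal m - UU ** vv.
  by rewrite -(vec_anti wv wu) -ev -eu /UU addrK.
have -> : GG = UU ** (clscale (-2) vv + clscale ((m - s) / k) UU).
  rewrite /GG hm clmulDr !clmulZr hk.
  set P := UU ** vv.
  apply/ffunP => C; rewrite !ffunE; field; apply/andP; split; [exact: k0 | exact: hmu1].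
have hUv : isvec UU by exact: hU.
apply: good_mul; first exact: good_vec.
apply: good_vec; apply: isvecD; apply: isvecZ => //; exact: isvec_v.
Qed.

Lemma K_good : good KK.
Proof. rewrite K_eq; apply: good_mul; [exact: good_clscale | exact: G_good]. Qed.
Lemma K_neq0 : KK != 0.
Proof. by apply/eqP => K0; move: G_neq0; rewrite -revc_K K0 clmul0r eqxx. Qed.

Lemma psi_formula (z : Cl) : isvec z -> lastc z != 0 ->
  psi z = a ** clinv c + KK ** clinv (z + vv) ** clinv c.
Proof.
move=> hz hz0.
have hzv : isvec (z + vv) by apply: isvecD => //; exact: isvec_v.
have nzv : lastc (z + vv) != 0 by rewrite lastcD lastc_v addr0.
have [gzv zv0] := vec_inv hzv nzv.
have izv := isinv_good gzv zv0.
have ic := isinv_good gc c_neq0.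
have eX : c ** z + d = c ** (z + vv) by rewrite dv clmulDr.
rewrite /psi eX (clinv_eq (isinv_mul ic izv)).
have eA : a ** z + b = a ** (z + vv) + KK.
  rewrite /KK clmulDr; set P1 := a ** z; set P2 := a ** vv; zsolve.
rewrite eA clmulDl; congr (_ + _); last by rewrite clmulA.
by rewrite -clmulA (clmulA a (z + vv)) izv.1 clmul1r.
Qed.

Lemma inv_diff (p q pi qi : Cl) : isinv p pi -> isinv q qi -> pi - qi = pi ** (q - p) ** qi.
Proof.
by move=> [h1 h2] [h3 h4]; rewrite clmulBr clmulBl h2 clmul1l clmulA h3 clmul1r.
Qed.

Lemma subDl (u w z : Cl) : (z + u) - (z + w) = u - w.
Proof. by rewrite opprD addrACA subrr add0r. Qed.

Lemma case1 (x y : Cl) : isvec x -> isvec y -> 0 < lastc x -> 0 < lastc y ->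
  clnorm (Cxy (psi x) (psi y)) = clnorm en * clnorm (x - y) * (clnorm (x - hat y))^-1.
Proof.
move=> hx hy lx ly.
have ly0 : lastc y != 0 by rewrite gt_eqF.
have lx0 : lastc x != 0 by rewrite gt_eqF.
have hq := claim1 hy ly0.
have hyh : isvec (hat y) by exact: isvec_hat hl _ hy.
have lyh : lastc (hat y) != 0 by rewrite (lastc_hat hl) oppr_eq0.
have hvv := isvec_v.
set xv := x + vv. set yv := y + vv. set hv := hat y + vv.
have [gxv xv0] : good xv /\ xv != 0.
  by apply: vec_inv; [exact: isvecD | rewrite lastcD lastc_v addr0].
have [gyv yv0] : good yv /\ yv != 0.
  by apply: vec_inv; [exact: isvecD | rewrite lastcD lastc_v addr0].
have [ghv hv0] : good hv /\ hv != 0.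
  by apply: vec_inv; [exact: isvecD | rewrite lastcD lastc_v addr0].
have hW : isvec (hv - xv) by apply: isvecB; exact: isvecD.
have W0 : lastc (hv - xv) != 0.
  rewrite lastcB !lastcD lastc_v !addr0 (lastc_hat hl) -opprD oppr_eq0 gt_eqF //.
  exact: addr_gt0.
have [gW Wn0] := vec_inv hW W0.
have gxy : good (yv - xv) by apply: good_vec; apply: isvecB; exact: isvecD.
have ixv := isinv_good gxv xv0. have iyv := isinv_good gyv yv0.
have ihv := isinv_good ghv hv0. have iW := isinv_good gW Wn0.
have iK := isinv_good K_good K_neq0. have ic := isinv_good gc c_neq0.
have e1 : psi x - psi y = KK ** (clinv xv ** (yv - xv) ** clinv yv) ** clinv c.
  rewrite (psi_formula hx lx0) (psi_formula hy ly0) subDl -clmulBl -clmulBr.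
  by rewrite (inv_diff ixv iyv).
have e2 : psi x - hat (psi y) = KK ** (clinv xv ** (hv - xv) ** clinv hv) ** clinv c.
  rewrite -hq (psi_formula hx lx0) (psi_formula hyh lyh) subDl -clmulBl -clmulBr.
  by rewrite (inv_diff ixv ihv).
have iv : isinv (KK ** (clinv xv ** (hv - xv) ** clinv hv) ** clinv c)
                (c ** ((hv ** (clinv (hv - xv) ** xv)) ** clinv KK)).
  apply: isinv_mul; last exact: isinv_sym.
  apply: isinv_mul => //; apply: isinv_mul; last exact: isinv_sym.
  by apply: isinv_mul => //; exact: isinv_sym.
have gixv := good_inv_good gxv xv0. have giyv := good_inv_good gyv yv0.
have gic := good_inv_good gc c_neq0. have giW := good_inv_good gW Wn0.
have giK := good_inv_good K_good K_neq0. have gK := K_good.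
rewrite /Cxy !clsubE e1 e2 (clinv_eq iv).
rewrite !norm_mul; try by repeat first [assumption | exact: good_en | apply: good_mul].
have kn0 := K_neq0. have cn0 := c_neq0.
rewrite !norm_inv //.
have -> : yv - xv = - (x - y) by rewrite /yv /xv subDr opprB.
have -> : hv - xv = - (x - hat y) by rewrite /hv /xv subDr opprB.
have -> : hv = hat yv by rewrite /hv /yv (hatD hl) hat_v.
rewrite !norm_opp (norm_hat hl).
have nK : clnorm KK != 0 by rewrite clnorm_eq0 K_neq0.
have nc : clnorm c != 0 by rewrite clnorm_eq0 c_neq0.
have nx : clnorm xv != 0 by rewrite clnorm_eq0.
have ny : clnorm yv != 0 by rewrite clnorm_eq0.
have nw : clnorm (x - hat y) != 0.
  rewrite clnorm_eq0; apply: (@lastc_neq0 _ _ l).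
  by rewrite lastcB (lastc_hat hl) opprK gt_eqF // addr_gt0.
by field; rewrite nK nc nx ny nw.
Qed.
End Case1.
End Main.
Lemma vp_hat (R : realType) (n : nat) (l : 'I_n) (hl : forall i : 'I_n, is_last i = (i == l))
  (s : seq ('I_n -> R)) : (forall v, List.In v s -> in_Rn1 v) -> clhat (vp s) = vp s.
Proof.
elim: s => [|v s IH] h; first exact: hat1 hl.
rewrite vp_cons (hatM hl) (hat_vecR hl); last by apply: h; left.
by rewrite IH // => w hw; apply: h; right.
Qed.

Theorem lemma2 (R : realType) (n : nat) (hn : (2 < n)%N) (a b c d : Cl R n)
  (hpsi : vahlen a b c d) :
  forall x y : 'I_n -> R, upper x -> upper y ->
    mobius a b c d (clhat (clvec y)) = clhat (mobius a b c d (clvec y)) /\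
    clnorm (Cxy (clvec x) (clvec y)) =
    clnorm (Cxy (mobius a b c d (clvec x)) (mobius a b c d (clvec y))).
Proof.
move=> x y ux uy.
have hl0 : (n.-1 < n)%N by lia.
pose l : 'I_n := Ordinal hl0.
have hl : forall i : 'I_n, is_last i = (i == l).
  by move=> i; rewrite /is_last -val_eqE.
have ll : is_last l by rewrite hl.
move: hpsi => [[[sa [hsa ea]] [sb [hsb eb]] [sc [hsc ec]] [sd [hsd ed]]] [[hv1 hv2 hv3 hv4] hdet]].
have ga : good a by rewrite ea; exact: vp_good.
have gc : good c by rewrite ec; exact: vp_good.
have gd : good d by rewrite ed; exact: vp_good.
have ha : clhat a = a by rewrite ea; exact: vp_hat hl _ hsa.
have hb : clhat b = b by rewrite eb; exact: vp_hat hl _ hsb.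
have hc : clhat c = c by rewrite ec; exact: vp_hat hl _ hsc.
have hd : clhat d = d by rewrite ed; exact: vp_hat hl _ hsd.
have [s [hs hdet']] : exists s : R, s != 0 /\ clmul (clrev a) d - clmul (clrev b) c = scal n s.
  rewrite -clsubE; case: hdet => ->; first by exists 1%R; rewrite oner_eq0 scal1.
  exists (-1)%R; split; first by rewrite oppr_eq0 oner_eq0.
  by rewrite cloppE; zsolve.
have hU : isvec (clmul (clrev a) c) by move: hv1 => [w [_ ->]]; eexists.
have hV : isvec (clmul (clrev c) d) by move: hv2 => [w [_ ->]]; eexists.
have hVh : clhat (clmul (clrev c) d) = clmul (clrev c) d.
  by move: hv2 => [w [hw ->]]; exact: hat_vecR.
have hVl : lastc l (clmul (clrev c) d) = 0.
  by move: hv2 => [w [hw ->]]; rewrite lastc_vec; exact: hw.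
have hcc : c = 0 \/ exists mu, mu != 0 /\ clmul (clrev c) c = scal n mu /\ clmul c (clrev c) = scal n mu.
  rewrite ec; case: (vp_cases sc) => h; first by left.
  by right; exists (mu sc); split => //; exact: vp_rev.
have em : forall z, mobius a b c d z = psi a b c d z.
  by move=> z; rewrite /mobius /psi !claddE.
have hx : isvec (clvec x) by eexists.
have hy : isvec (clvec y) by eexists.
have lx : 0 < lastc l (clvec x) by rewrite lastc_vec; exact: ux.
have ly : 0 < lastc l (clvec y) by rewrite lastc_vec; exact: uy.
rewrite !em; split.
  by apply: (claim1 hl gc gd ha hb hc hd hs hdet' hV hVl hcc) => //; rewrite gt_eqF.
rewrite (Cxy_base hl) //; last first.
  by rewrite lastcB (lastc_hat hl) opprK gt_eqF // addr_gt0.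
case: (hcc) => [c0|[m [hm1 [hm2 hm3]]]].
  by rewrite (case0 hl ga gc gd ha hb hc hd hs hdet' hV hVl hcc c0).
by rewrite (case1 hl gc gd ha hb hc hd hs hdet' hU hV hVh hVl hcc hm1 hm2 hm3).
Qed.
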